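(* Let the target locations $S^*_1,\dots,S^*_M$ be pairwise distinct, let $(S_n)_{n\ge1}$ satisfy infill asymptotics with respect to them, and let $k_N$ be the adaptive number-of-neighbors sequence for some positive $(a_t)$ with $a_t\to0$. Then there exists $N_0$ such that for all $N\ge N_0$, all $m\ne m'$ and all $1\le n\le N$, $\Psi^{N,k_N}_{mn}\Psi^{N,k_N}_{m'n}=0$.
   Context: $(\mathcal S,d)$ metric space. Infill asymptotics: for every $m$ and open $U\ni S^*_m$, infinitely many $n$ satisfy $S_n\in U$. $\Psi^{N,k}\in\mathbb R^{M\times N}$: $\Psi^{N,k}_{mn}=1/k$ if $S_n$ is among the $k$ points of $\{S_1,\dots,S_N\}$ closest to $S^*_m$, else $0$ (ties broken uniformly at random). Adaptive sequence: $R_{N,t}=\max_m\max\{d(S^*_m,S_n):n\le N,\ S_n \text{ among the } t \text{ nearest neighbors of } S^*_m\text{ in }\{S_1,\dots,S_N\}\}$; $k_1=1$ and $k_{N+1}=k_N+1$ if $R_{N+1,k_N+1}\le a_{k_N}$, else $k_{N+1}=k_N$. *)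

(* Defs.v *)
From HB Require Import structures.
From mathcomp Require Import all_boot all_order all_algebra.
From mathcomp Require Import all_classical all_reals all_analysis.
Set Implicit Arguments. Unset Strict Implicit. Unset Printing Implicit Defensive.
Import Order.TTheory GRing.Theory Num.Theory.
Local Open Scope ring_scope.

Definition is_metric (R : realType) (T : Type) (d : T -> T -> R) : Prop :=
  (forall x y, 0 <= d x y) /\
  (forall x y, d x y = 0 <-> x = y) /\
  (forall x y, d x y = d y x) /\
  (forall x y z, d x z <= d x y + d y z).

Definition metric_open (R : realType) (T : Type) (d : T -> T -> R) (U : T -> Prop) : Prop :=
  forall x, U x -> exists e : R, 0 < e /\ forall y, d x y < e -> U y.

(* Sample points: S : nat -> T, where S i denotes the paper's S_{i+1};
   thus {S_1,...,S_N} is indexed by i : 'I_N.  Targets Sstar : 'I_M -> T. *)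

Definition infill (R : realType) (T : Type) (d : T -> T -> R) (M : nat)
  (Sstar : 'I_M -> T) (S : nat -> T) : Prop :=
  forall (m : 'I_M) (U : T -> Prop), metric_open d U -> U (Sstar m) ->
    forall n0 : nat, exists n : nat, (n0 <= n)%N /\ U (S n).

Definition is_knn (R : realType) (T : Type) (d : T -> T -> R) (M : nat)
  (Sstar : 'I_M -> T) (S : nat -> T) (N k : nat) (m : 'I_M) (A : {set 'I_N}) : Prop :=
  #|A| = k /\
  forall n n' : 'I_N, n \in A -> n' \notin A -> d (Sstar m) (S n) <= d (Sstar m) (S n').

Definition tie_breaking (R : realType) (T : Type) (d : T -> T -> R) (M : nat)
  (Sstar : 'I_M -> T) (S : nat -> T) (sel : forall N : nat, nat -> 'I_M -> {set 'I_N}) : Prop :=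
  forall N k m, (k <= N)%N -> @is_knn R T d M Sstar S N k m (sel N k m).

Definition Psi (R : realType) (M : nat) (sel : forall N : nat, nat -> 'I_M -> {set 'I_N})
  (N k : nat) (m : 'I_M) (n : 'I_N) : R :=
  if n \in sel N k m then k%:R^-1 else 0.

Definition Rad (R : realType) (T : Type) (d : T -> T -> R) (M : nat)
  (Sstar : 'I_M -> T) (S : nat -> T) (sel : forall N : nat, nat -> 'I_M -> {set 'I_N})
  (N t : nat) : R :=
  \big[Num.max/0]_(m < M) \big[Num.max/0]_(n in sel N t m) d (Sstar m) (S n).

(* kk i = k_{i+1} : k_1 = 1, k_{N+1} = k_N + 1 if R_{N+1,k_N+1} <= a_{k_N}, else k_N. *)
Fixpoint kk (R : realType) (T : Type) (d : T -> T -> R) (M : nat)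
  (Sstar : 'I_M -> T) (S : nat -> T) (sel : forall N : nat, nat -> 'I_M -> {set 'I_N})
  (a : nat -> R) (i : nat) : nat :=
  match i with
  | 0 => 1
  | i'.+1 =>
      let kN := kk d Sstar S sel a i' in
      if Rad d Sstar S sel i.+1 kN.+1 <= a kN then kN.+1 else kN
  end.

Definition kseq (R : realType) (T : Type) (d : T -> T -> R) (M : nat)
  (Sstar : 'I_M -> T) (S : nat -> T) (sel : forall N : nat, nat -> 'I_M -> {set 'I_N})
  (a : nat -> R) (N : nat) : nat :=
  kk d Sstar S sel a N.-1.

(* Main.v *)
Require Import Defs.
From HB Require Import structures.
From mathcomp Require Import all_boot all_order all_algebra.
From mathcomp Require Import all_classical all_reals all_analysis.
From mathcomp Require Import lra zify.
Import Order.TTheory GRing.Theory Num.Theory numFieldNormedType.Exports.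
Local Open Scope ring_scope.
Local Open Scope classical_set_scope.
Set Implicit Arguments. Unset Strict Implicit.

Definition cnt (R : realType) (T : Type) (d : T -> T -> R) (S : nat -> T)
  (x : T) (r : R) (N : nat) : nat := (\sum_(i < N) (((d x (S i) <= r)%R : bool) : nat))%N.

Lemma cnt_card (R : realType) (T : Type) (d : T -> T -> R) (S : nat -> T) x r N :
  cnt d S x r N = #|[set n : 'I_N | d x (S n) <= r]%SET|.
Proof.
rewrite /cnt -sum1_card [RHS]big_mkcond /=; apply: eq_bigr => i _.
by rewrite inE; case: (_ <= _)%R.
Qed.

Lemma cntS (R : realType) (T : Type) (d : T -> T -> R) (S : nat -> T) x r N :
  cnt d S x r N.+1 = (cnt d S x r N + ((d x (S N) <= r)%R : bool))%N.
Proof. by rewrite /cnt big_ord_recr. Qed.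

Lemma cnt_mono (R : realType) (T : Type) (d : T -> T -> R) (S : nat -> T) x r N N' :
  (N <= N')%N -> (cnt d S x r N <= cnt d S x r N')%N.
Proof.
move/subnK => <-; elim: (N' - N)%N => [//|k IH].
by rewrite addSn cntS (leq_trans IH) ?leq_addr.
Qed.

Lemma cnt_grow (R : realType) (T : Type) (d : T -> T -> R) (S : nat -> T) x r :
  (forall n0, exists n, (n0 <= n)%N /\ d x (S n) <= r) ->
  forall j, exists N1, (j <= cnt d S x r N1)%N.
Proof.
move=> H; elim=> [|j [N1 HN1]]; first by exists 0%N.
have [n [Hn Hd]] := H N1; exists n.+1.
rewrite cntS Hd; apply: (leq_trans _ (leq_add (cnt_mono d S x r Hn) (leqnn 1))).
by rewrite addn1.
Qed.

Lemma knn_le (R : realType) (T : Type) (d : T -> T -> R) (M : nat)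
  (Sstar : 'I_M -> T) (S : nat -> T) N k m (A : {set 'I_N}) r :
  is_knn d Sstar S k m A -> (k <= cnt d S (Sstar m) r N)%N ->
  forall n, n \in A -> d (Sstar m) (S n) <= r.
Proof.
move=> [hA hle] hc n nA; rewrite leNgt; apply/negP => hlt.
have sub: ([set n' : 'I_N | d (Sstar m) (S n') <= r] \subset A :\ n)%SET.
  apply/fintype.subsetP => n'; rewrite !inE => h'.
  case nA': (n' \in A); last first.
    have := hle n n' nA (negbT nA').
    by move=> h2; have := lt_le_trans hlt (le_trans h2 h'); rewrite ltxx.
  rewrite andbT; apply/eqP => e; subst n'.
  by have := lt_le_trans hlt h'; rewrite ltxx.
have h1 := subset_leq_card sub; rewrite cnt_card in hc.
have := cardsD1 n A; rewrite nA hA => e.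
have h3 := leq_trans hc h1. by move: h3; rewrite e add1n ltnn.
Qed.

Lemma knn_ge (R : realType) (T : Type) (d : T -> T -> R) (M : nat)
  (Sstar : 'I_M -> T) (S : nat -> T) N k m (A : {set 'I_N}) r :
  is_knn d Sstar S k m A -> (forall n, n \in A -> d (Sstar m) (S n) <= r) ->
  (k <= cnt d S (Sstar m) r N)%N.
Proof.
move=> [hA _] h; rewrite cnt_card -hA; apply: subset_leq_card.
by apply/fintype.subsetP => n nA; rewrite inE h.
Qed.

Lemma Rad_le (R : realType) (T : Type) (d : T -> T -> R) (M : nat)
  (Sstar : 'I_M -> T) (S : nat -> T) (sel : forall N : nat, nat -> 'I_M -> {set 'I_N}) N t r :
  Rad d Sstar S sel N t <= r ->
  forall m n, n \in sel N t m -> d (Sstar m) (S n) <= r.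
Proof.
move/bigmax_leP => [_ h] m n hn.
by have /bigmax_leP [_ h2] := h m isT; exact: h2.
Qed.

Lemma le_Rad (R : realType) (T : Type) (d : T -> T -> R) (M : nat)
  (Sstar : 'I_M -> T) (S : nat -> T) (sel : forall N : nat, nat -> 'I_M -> {set 'I_N}) N t r : 0 <= r ->
  (forall m n, n \in sel N t m -> d (Sstar m) (S n) <= r) ->
  Rad d Sstar S sel N t <= r.
Proof.
move=> r0 h; apply/bigmax_leP; split => // m _.
by apply/bigmax_leP; split => // n hn; exact: h.
Qed.

Section KK.
Variables (R : realType) (T : Type) (d : T -> T -> R) (M : nat)
  (Sstar : 'I_M -> T) (S : nat -> T)
  (sel : forall N : nat, nat -> 'I_M -> {set 'I_N}) (a : nat -> R).

Lemma kk_step i : kk d Sstar S sel a i.+1 = kk d Sstar S sel a i \/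
  (kk d Sstar S sel a i.+1 = (kk d Sstar S sel a i).+1 /\
   Rad d Sstar S sel i.+2 (kk d Sstar S sel a i).+1 <= a (kk d Sstar S sel a i)).
Proof. by rewrite /=; case: ifP => h; [right|left]. Qed.

Lemma kk_le i : (kk d Sstar S sel a i <= i.+1)%N.
Proof. elim: i => [//|i IH]; by case: (kk_step i) => [->|[-> _]]; lia. Qed.

Lemma kk_ge1 i : (1 <= kk d Sstar S sel a i)%N.
Proof. elim: i => [//|i IH]; by case: (kk_step i) => [->|[-> _]]; lia. Qed.

Lemma kk_mono i j : (i <= j)%N -> (kk d Sstar S sel a i <= kk d Sstar S sel a j)%N.
Proof.
move/subnK => <-; elim: (j - i)%N => [//|k IH].
by rewrite addSn; case: (kk_step (k + i)) => [->|[-> _]] //; lia.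
Qed.
End KK.

Lemma open_ball (R : realType) (T : Type) (d : T -> T -> R) (x : T) (e : R) :
  is_metric d -> metric_open d (fun y => d x y < e).
Proof.
move=> [h0 [h1 [h2 h3]]] y hy; exists (e - d x y); split; first by rewrite subr_gt0.
move=> z hz; have := h3 x y z; lra.
Qed.

Lemma kk_unbounded (R : realType) (T : Type) (d : T -> T -> R) (M : nat)
  (Sstar : 'I_M -> T) (S : nat -> T)
  (sel : forall N : nat, nat -> 'I_M -> {set 'I_N}) (a : nat -> R) :
  is_metric d -> infill d Sstar S -> tie_breaking d Sstar S sel ->
  (forall t, (0 < t)%N -> 0 < a t) ->
  forall i, exists j, (kk d Sstar S sel a i < kk d Sstar S sel a j)%N.
Proof.
move=> hd hinf htb ha i.
set K := kk d Sstar S sel a i.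
have aK : 0 < a K by apply: ha; exact: kk_ge1.
have hm : forall m : 'I_M, exists N1, (K.+1 <= cnt d S (Sstar m) (a K) N1)%N.
  move=> m; apply: cnt_grow => n0.
  have [|n [Hn Hu]] := hinf m (fun y => d (Sstar m) y < a K) (@open_ball _ _ _ _ _ hd) _ n0.
    by case: hd => _ [h1 _]; rewrite (proj2 (h1 _ _)).
  by exists n; split => //; apply: ltW.
have [f hf] := choice hm.
set N1 := (\max_(m < M) f m)%N.
have hN1 : forall m, (K.+1 <= cnt d S (Sstar m) (a K) N1)%N.
  by move=> m; apply: (leq_trans (hf m)); apply: cnt_mono; exact: (leq_bigmax m).
set j := maxn i N1.
have hKj : (K <= kk d Sstar S sel a j)%N by apply: kk_mono; exact: leq_maxl.
case: (ltngtP K (kk d Sstar S sel a j)) => [lt|gt|hE]; [by exists j| by move: hKj; rewrite leqNgt gt|].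
exists j.+1; case: (kk_step d Sstar S sel a j) => [e|[-> _]]; last by rewrite -hE.
exfalso; move: e; rewrite /= -hE.
have -> : Rad d Sstar S sel j.+2 K.+1 <= a K.
  apply: le_Rad; first exact: ltW.
  move=> m n hn; have kle : (K.+1 <= j.+2)%N by rewrite hE ltnS kk_le.
  apply: (knn_le (htb _ _ m kle)) hn.
  apply: (leq_trans (hN1 m)); apply: cnt_mono.
  by apply: (leq_trans (leq_maxr i N1)); lia.
by move=> /eqP; rewrite eqn_leq ltnn.
Qed.

Lemma kk_reach (R : realType) (T : Type) (d : T -> T -> R) (M : nat)
  (Sstar : 'I_M -> T) (S : nat -> T)
  (sel : forall N : nat, nat -> 'I_M -> {set 'I_N}) (a : nat -> R) :
  is_metric d -> infill d Sstar S -> tie_breaking d Sstar S sel ->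
  (forall t, (0 < t)%N -> 0 < a t) ->
  forall K, exists j, (K <= kk d Sstar S sel a j)%N.
Proof.
move=> hd hinf htb ha; elim=> [|K [j hj]]; first by exists 0%N.
have [j' hj'] := kk_unbounded hd hinf htb ha j.
by exists j'; apply: leq_ltn_trans hj'.
Qed.

Lemma kk_inv (R : realType) (T : Type) (d : T -> T -> R) (M : nat)
  (Sstar : 'I_M -> T) (S : nat -> T)
  (sel : forall N : nat, nat -> 'I_M -> {set 'I_N}) (a : nat -> R) (r : R) (T0 : nat) :
  tie_breaking d Sstar S sel -> (1 <= T0)%N ->
  (forall t, (T0 <= t)%N -> a t <= r) ->
  forall i, (T0 < kk d Sstar S sel a i)%N ->
  forall m, (kk d Sstar S sel a i <= cnt d S (Sstar m) r i.+1)%N.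
Proof.
move=> htb hT ha; elim=> [/=|i IH]; first by lia.
case: (kk_step d Sstar S sel a i) => [->|[-> hR]] hi m.
  by apply: (leq_trans (IH hi m)); apply: cnt_mono.
have kle : ((kk d Sstar S sel a i).+1 <= i.+2)%N by rewrite ltnS kk_le.
apply: (knn_ge (htb _ _ m kle)) => n hn.
apply: (Rad_le (le_trans hR (ha _ _))) hn; lia.
Qed.

Lemma Psi0 (R : realType) (M : nat) (sel : forall N : nat, nat -> 'I_M -> {set 'I_N})
  N k m m' (n : 'I_N) : ~ (n \in sel N k m /\ n \in sel N k m') ->
  @Psi R M sel N k m n * @Psi R M sel N k m' n = 0.
Proof.
rewrite /Psi; case: ifP => h1; case: ifP => h2 //; rewrite ?mulr0 ?mul0r //.
by move=> []; split.
Qed.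

Lemma pairwise (R : realType) (T : Type) (d : T -> T -> R) (M : nat)
  (Sstar : 'I_M -> T) (S : nat -> T)
  (sel : forall N : nat, nat -> 'I_M -> {set 'I_N}) (a : nat -> R) :
  is_metric d ->
  injective Sstar ->
  infill d Sstar S ->
  tie_breaking d Sstar S sel ->
  (forall t, (0 < t)%N -> 0 < a t) ->
  a @ \oo --> 0%R ->
  forall (m m' : 'I_M), m != m' -> exists N0 : nat, forall N : nat, (N0 <= N)%N ->
    forall n : 'I_N,
      @Psi R M sel N (kseq d Sstar S sel a N) m n * @Psi R M sel N (kseq d Sstar S sel a N) m' n = 0.
Proof.
move=> hd hinj hinf htb ha hcv m m' hmm.
have hd' := hd; case: hd' => [h0 [h1 [h2 h3]]].
set r := d (Sstar m) (Sstar m') / 3.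
have dpos : 0 < d (Sstar m) (Sstar m').
  rewrite lt_neqAle h0 andbT eq_sym; apply/eqP => /h1 /hinj e.
  by move/eqP: hmm; apply.
have rpos : 0 < r by rewrite /r divr_gt0.
have [T1 _ HT] := cvgr0_norm_lt a hcv _ rpos.
set T0 := maxn T1 1.
have haT : forall t, (T0 <= t)%N -> a t <= r.
  move=> t ht; have := HT t; rewrite /= => /(_ _)/ltW h.
  apply: le_trans (ler_norm _) (h _); rewrite /T0 in ht; lia.
have [j hj] := kk_reach hd hinf htb ha T0.+1.
exists j.+1 => N hN n; apply: Psi0 => -[hn hn'].
rewrite /kseq in hn hn'.
have hk : (T0 < kk d Sstar S sel a N.-1)%N.
  by apply: (leq_trans hj); apply: kk_mono; lia.
have hinv := kk_inv htb (leq_maxr T1 1) haT hk.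
have NN : N.-1.+1 = N by lia.
rewrite NN in hinv.
have kle : (kk d Sstar S sel a N.-1 <= N)%N by rewrite -{2}NN kk_le.
have e1 := knn_le (htb _ _ m kle) (hinv m) hn.
have e2 := knn_le (htb _ _ m' kle) (hinv m') hn'.
have := h3 (Sstar m) (S n) (Sstar m'); rewrite (h2 (S n)).
rewrite /r in e1 e2; lra.
Qed.

Theorem lemmaE1 (R : realType) (T : Type) (d : T -> T -> R) (M : nat)
  (Sstar : 'I_M -> T) (S : nat -> T)
  (sel : forall N : nat, nat -> 'I_M -> {set 'I_N}) (a : nat -> R) :
  is_metric d ->
  injective Sstar ->
  infill d Sstar S ->
  tie_breaking d Sstar S sel ->
  (forall t, (0 < t)%N -> 0 < a t) ->
  a @ \oo --> 0%R ->
  exists N0 : nat, forall N : nat, (N0 <= N)%N ->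
    forall (m m' : 'I_M), m != m' -> forall n : 'I_N,
      @Psi R M sel N (kseq d Sstar S sel a N) m n * @Psi R M sel N (kseq d Sstar S sel a N) m' n = 0.
Proof.
move=> hd hinj hinf htb ha hcv.
have hp : forall p : 'I_M * 'I_M, exists N0 : nat, p.1 != p.2 -> forall N : nat, (N0 <= N)%N ->
    forall n : 'I_N,
      @Psi R M sel N (kseq d Sstar S sel a N) p.1 n * @Psi R M sel N (kseq d Sstar S sel a N) p.2 n = 0.
  move=> [m m'] /=; case: (eqVneq m m') => [_|hmm]; first by exists 0%N.
  have [N0 HN0] := pairwise hd hinj hinf htb ha hcv hmm.
  by exists N0.
have [f hf] := choice hp.
exists (\max_(p : 'I_M * 'I_M) f p)%N => N hN m m' hmm n.
apply: (hf (m, m')) => //=.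
by apply: leq_trans hN; exact: (leq_bigmax (m, m')).
Qed.
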